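(* Let $G$ be a $\sigma$-finite abelian group and fix an exhausting sequence $(G_n)_{n\geq 1}$ of $G$. Let $A\subset G$ and $B\subset G$ satisfy at least one of the following three hypotheses: \begin{enumerate} \item $\underline{\mathrm{d}}(A+B)< \underline{\mathrm{d}}(A)+\underline{\mathrm{d}}(B)$; \item $\overline{\mathrm{d}}(A+B)< \overline{\mathrm{d}}(A)+\overline{\mathrm{d}}(B)$, and $A=B$ or $A=-B$; \item $\overline{\mathrm{d}}(A+B)< \overline{\mathrm{d}}(A)+\underline{\mathrm{d}}(B)$. \end{enumerate} Then the subgroup $H=\mathrm{Stab}(A+B)$ has finite index $q=[G:H]$ in $G$, and $H$ admits a density, with $\mathrm{d}(H)=q^{-1}$. Moreover, if $a,b,c$ denote the numbers of cosets of $H$ in $G$ that meet $A$, $B$, $A+B$ respectively, then $c=a+b-1$.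
   Context: A group $G$ is $\sigma$-finite if it is infinite and admits an exhausting sequence, i.e. a non-decreasing sequence $(G_n)_{n\ge1}$ of finite subgroups with $G=\bigcup_{n\ge1}G_n$. For $A\subset G$ (with respect to the fixed exhausting sequence) the lower and upper asymptotic densities are $\underline{\mathrm{d}}(A)=\liminf_{n\to\infty}\frac{|A\cap G_n|}{|G_n|}$ and $\overline{\mathrm{d}}(A)=\limsup_{n\to\infty}\frac{|A\cap G_n|}{|G_n|}$; if they coincide, $A$ is said to admit a density, and the common value is denoted $\mathrm{d}(A)$. For $X\subset G$, $\mathrm{Stab}(X)=\{g\in G: g+x\in X \text{ for all } x\in X\}$ is the stabilizer (period) of $X$. $A+B=\{a+b: a\in A, b\in B\}$ and $-B=\{-b: b\in B\}$. *)

(* Defs.v *)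
From HB Require Import structures.
From mathcomp Require Import all_boot all_order all_algebra.
From mathcomp Require Import finmap.
From mathcomp Require Import all_classical all_reals all_analysis.
Set Implicit Arguments. Unset Strict Implicit. Unset Printing Implicit Defensive.
Import Order.TTheory GRing.Theory Num.Theory.
Local Open Scope classical_set_scope.
Local Open Scope ring_scope.

(* (G_n) is an exhausting sequence: non-decreasing finite subgroups covering G
   (indexed from 0 instead of 1, which is immaterial). *)
Definition is_subgroup (G : zmodType) (H : set G) :=
  H 0 /\ forall x y, H x -> H y -> H (x - y).

Definition exhausting_seq (G : zmodType) (Gn : nat -> set G) :=
  [/\ forall n, finite_set (Gn n),
      forall n, is_subgroup (Gn n),
      forall n, Gn n `<=` Gn n.+1
    & \bigcup_n Gn n = [set: G]].

Definition sigma_finite_seq (G : zmodType) (Gn : nat -> set G) :=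
  infinite_set [set: G] /\ exhausting_seq Gn.

Definition dens_ratio (R : realType) (G : zmodType) (Gn : nat -> set G)
  (A : set G) (n : nat) : R :=
  (#|` fset_set (A `&` Gn n)|%fset)%:R / (#|` fset_set (Gn n)|%fset)%:R.

Definition ldens (R : realType) (G : zmodType) (Gn : nat -> set G) (A : set G) : R :=
  limn_inf (dens_ratio R Gn A).
Definition udens (R : realType) (G : zmodType) (Gn : nat -> set G) (A : set G) : R :=
  limn_sup (dens_ratio R Gn A).

Definition sumset (G : zmodType) (A B : set G) : set G :=
  [set a + b | a in A & b in B].
Definition oppset (G : zmodType) (B : set G) : set G := [set - b | b in B].

Definition Stab (G : zmodType) (X : set G) : set G :=
  [set g | forall x, X x -> X (g + x)].

Definition coset (G : zmodType) (H : set G) (g : G) : set G := [set g + h | h in H].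

Definition cosets (G : zmodType) (H : set G) : set (set G) :=
  [set C | exists g, C = coset H g].

Definition cosets_meeting (G : zmodType) (H : set G) (A : set G) : set (set G) :=
  [set C | cosets H C /\ C `&` A !=set0].

(* Main.v *)
Require Import Defs.
From HB Require Import structures.
From mathcomp Require Import all_boot all_order all_algebra.
From mathcomp Require Import finmap.
From mathcomp Require Import all_classical all_reals all_analysis.
From mathcomp Require Import zify lra.
Import Order.TTheory GRing.Theory Num.Theory.
Local Open Scope classical_set_scope.
Local Open Scope ring_scope.
Set Implicit Arguments. Unset Strict Implicit. Unset Printing Implicit Defensive.

Section KneserFin.
Local Open Scope fset_scope.
Local Open Scope ring_scope.
Variable G : zmodType.
Implicit Types (A B X Y P Q Z : {fset G}).

Definition sumf A B : {fset G} := [fset a + b | a in A, b in B].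
Definition shf (g : G) X : {fset G} := [fset g + x | x in X].
Definition stabf X : {fset G} :=
  [fset d in [fset x - y | x in X, y in X] | shf d X `<=` X].

Lemma sumfP A B z :
  reflect (exists a b, [/\ a \in A, b \in B & z = a + b]) (z \in sumf A B).
Proof.
apply: (iffP (imfset2P _ _ _ _ _)) => [[a aA [b bB ->]]|[a [b [aA bB ->]]]].
  by exists a, b.
by exists a => //; exists b.
Qed.

Lemma mem_sumf A B a b : a \in A -> b \in B -> a + b \in sumf A B.
Proof. by move=> aA bB; apply/sumfP; exists a, b. Qed.

Lemma shfP g X y : (y \in shf g X) = (y - g \in X).
Proof.
apply/imfsetP/idP => [[x xX ->]|yX]; first by rewrite [g + x]addrC addrK.
by exists (y - g) => //; rewrite addrC subrK.
Qed.

Lemma mem_shf g X x : (g + x \in shf g X) = (x \in X).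
Proof. by rewrite shfP [g + x]addrC addrK. Qed.

Lemma card_shf g X : #|` shf g X| = #|` X|.
Proof. by rewrite card_imfset //=; apply: addrI. Qed.

Lemma stabfP X g : X != fset0 ->
  reflect (forall x, x \in X -> g + x \in X) (g \in stabf X).
Proof.
move=> X0; rewrite !inE /=.
apply: (iffP andP) => [[_ /fsubsetP sub] x xX|H].
  by apply: sub; rewrite mem_shf.
have /fset0Pn[x0 x0X] := X0.
split.
  by apply/imfset2P; exists (g + x0); rewrite ?H//; exists x0 => //; rewrite addrK.
by apply/fsubsetP => y; rewrite shfP => /H; rewrite addrC subrK.
Qed.

Lemma stabf_eq X g : X != fset0 -> g \in stabf X -> shf g X = X.
Proof.
move=> X0 /(stabfP _ X0) H; apply/fsetP/fsubset_cardP; first by rewrite card_shf.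
by apply/fsubsetP => y; rewrite shfP => /H; rewrite addrC subrK.
Qed.

Lemma stabf0 X : X != fset0 -> 0 \in stabf X.
Proof. by move=> X0; apply/(stabfP _ X0) => x; rewrite add0r. Qed.

Lemma stabfN X g : X != fset0 -> g \in stabf X -> - g \in stabf X.
Proof.
move=> X0 gX; apply/(stabfP _ X0) => x xX.
by move: xX; rewrite -{1}(stabf_eq X0 gX) shfP addrC.
Qed.

Lemma stabfD X g h : X != fset0 -> g \in stabf X -> h \in stabf X -> g + h \in stabf X.
Proof.
move=> X0 /(stabfP _ X0) gX /(stabfP _ X0) hX; apply/(stabfP _ X0) => x xX.
by rewrite -addrA; apply/gX/hX.
Qed.

Lemma stabfB X g h : X != fset0 -> g \in stabf X -> h \in stabf X -> g - h \in stabf X.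
Proof. by move=> X0 gX hX; apply: stabfD => //; apply: stabfN. Qed.

Lemma sumf_neq0 A B : A != fset0 -> B != fset0 -> sumf A B != fset0.
Proof.
move=> /fset0Pn[a aA] /fset0Pn[b bB]; apply/fset0Pn; exists (a + b).
exact: mem_sumf.
Qed.

Lemma stabf_sumf A B g : A != fset0 -> B != fset0 -> g \in stabf A ->
  g \in stabf (sumf A B).
Proof.
move=> A0 B0 /(stabfP _ A0) gA; apply/(stabfP _ (sumf_neq0 A0 B0)) => z.
by move=> /sumfP[a [b [aA bB ->]]]; rewrite addrA; apply: mem_sumf => //; apply: gA.
Qed.

Lemma sum_lb P Q Z p0 q0 : p0 \in P -> q0 \in Q ->
  (forall p q, p \in P -> q \in Q -> p - p0 = q - q0 -> p - p0 \in Z) ->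
  (#|` P| + #|` Q| <= #|` sumf P Q| + #|` Z|)%N.
Proof.
move=> p0P q0Q HZ.
have U : shf q0 P `|` shf p0 Q `<=` sumf P Q.
  apply/fsubsetP => z /fsetUP[]; rewrite shfP => zP.
    by rewrite -(subrK q0 z); apply: mem_sumf.
  by rewrite -(subrK p0 z) addrC; apply: mem_sumf.
have I : shf q0 P `&` shf p0 Q `<=` shf (p0 + q0) Z.
  apply/fsubsetP => z /fsetIP[]; rewrite !shfP => zP zQ.
  have := HZ _ _ zP zQ; rewrite opprD addrA.
  have -> : z - q0 - p0 = z - p0 - q0 by rewrite addrAC.
  by apply.
rewrite -(card_shf q0 P) -(card_shf p0 Q) -cardfsUI -(card_shf (p0 + q0) Z).
by apply: leq_add; apply: fsubset_leq_card.
Qed.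

Definition LW X Y w := [fset l in stabf Y | w + l \in X].

Lemma LWP X Y w l : (l \in LW X Y w) = (l \in stabf Y) && (w + l \in X).
Proof. by rewrite /LW in_fset. Qed.

Lemma kn_half X Y w p0 : X != fset0 -> Y != fset0 -> w \in X -> w \in Y ->
  p0 \in stabf Y -> w + p0 \notin X ->
  (#|` stabf Y `\` LW X Y w| + #|` LW Y X w| <=
     #|` Y `\` X| + #|` stabf X `&` stabf Y|)%N.
Proof.
move=> X0 Y0 wX wY p0L wp0X.
have p0P : p0 \in stabf Y `\` LW X Y w by rewrite in_fsetD LWP p0L (negbTE wp0X).
have q0Q : 0 \in LW Y X w by rewrite LWP stabf0 //= addr0 wY.
apply: leq_trans (sum_lb (Z := stabf X `&` stabf Y) p0P q0Q _) _.
  move=> p q /fsetDP[pL _]; rewrite LWP => /andP[qK _].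
  rewrite subr0 => E; rewrite in_fsetI; apply/andP; split; rewrite E //.
  by rewrite -E; apply: stabfB.
rewrite leq_add2r -(card_shf w); apply: fsubset_leq_card.
apply/fsubsetP => z; rewrite shfP => /sumfP[p [q [/fsetDP[pL pLw] qQ E]]].
move: qQ; rewrite LWP => /andP[qK wqY].
have zE : z = w + (p + q) by rewrite -E addrC subrK.
rewrite in_fsetD; apply/andP; split.
  apply/negP => zX; move: pLw; rewrite LWP pL /=.
  have := (stabfP _ X0 (stabfN X0 qK)) _ zX.
  by rewrite zE addrCA [p + q]addrC addKr => ->.
have := (stabfP _ Y0 pL) _ wqY.
by rewrite zE addrCA.
Qed.

Lemma I_sub_M X Y : X != fset0 -> Y != fset0 ->
  stabf X `&` stabf Y `<=` stabf (X `|` Y).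
Proof.
move=> X0 Y0; have XY0 : X `|` Y != fset0.
  by apply: fsubset_neq0 X0; apply: fsubsetUl.
apply/fsubsetP => g /fsetIP[/(stabfP _ X0) gX /(stabfP _ Y0) gY].
apply/(stabfP _ XY0) => z /fsetUP[/gX|/gY] h; rewrite in_fsetU h ?orbT //.
Qed.

Lemma card_LW X Y w : (#|` LW X Y w| + #|` stabf Y `\` LW X Y w| = #|` stabf Y|)%N.
Proof.
rewrite -[in RHS](cardfsID (LW X Y w)); congr (#|` _| + _)%N.
apply/esym/fsetIidPr/fsubsetP => l; rewrite LWP => /andP[].
by [].
Qed.

Lemma claim1 X Y w l : X != fset0 -> Y != fset0 ->
  (#|` Y `\` X| + #|` stabf (X `|` Y)| < #|` stabf X|)%N ->
  (#|` X `\` Y| + #|` stabf (X `|` Y)| < #|` stabf Y|)%N ->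
  w \in X -> w \in Y -> l \in stabf Y -> w + l \in X.
Proof.
move=> X0 Y0 H1 H2 wX wY lL.
case: (boolP (w + l \in X)) => // wlX; exfalso.
have h1 := kn_half X0 Y0 wX wY lL wlX.
have IM := fsubset_leq_card (I_sub_M X0 Y0).
have cK := card_LW Y X w.
have cL := card_LW X Y w.
have : (0 < #|` stabf X `\` LW Y X w|)%N by lia.
rewrite cardfs_gt0 => /fset0Pn[k1]; rewrite in_fsetD LWP => /andP[].
rewrite negb_and => /orP[/negP//|wk1Y k1K].
have h2 := kn_half Y0 X0 wY wX k1K wk1Y.
rewrite fsetIC in h2.
lia.
Qed.

Lemma fin_ineq X Y l : X != fset0 -> Y != fset0 ->
  (#|` Y `\` X| + #|` stabf (X `|` Y)| < #|` stabf X|)%N ->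
  (#|` X `\` Y| + #|` stabf (X `|` Y)| < #|` stabf Y|)%N ->
  l \in stabf Y -> l \notin stabf X -> (#|` stabf X| < #|` stabf Y|)%N.
Proof.
move=> X0 Y0 H1 H2 lL lK.
case: (boolP (all (fun x => l + x \in X) X)) => [/allP H|/allPn[x xX lxX]].
  by move: lK; have -> // : l \in stabf X by apply/(stabfP _ X0).
have xY : x \notin Y.
  apply/negP => xY; move: lxX; rewrite addrC.
  by rewrite (claim1 X0 Y0 H1 H2 xX xY lL).
apply: leq_ltn_trans (leq_trans _ H2); last by apply: leq_addr.
rewrite -(card_shf x); apply: fsubset_leq_card; apply/fsubsetP => z.
rewrite shfP => zK; have zX : z \in X.
  by rewrite -(subrK x z); apply: (stabfP _ X0 zK).
rewrite in_fsetD zX andbT; apply/negP => zY.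
move: xY; rewrite fsetUC in H1 H2.
have := claim1 Y0 X0 H2 H1 zY zX (stabfN X0 zK).
by rewrite opprB addrC subrK => ->.
Qed.

Lemma union_stab X Y : X `&` Y != fset0 ->
  (minn (#|` X| + #|` stabf X|) (#|` Y| + #|` stabf Y|) <=
    #|` X `|` Y| + #|` stabf (X `|` Y)|)%N.
Proof.
move=> XY.
have X0 : X != fset0 by apply: fsubset_neq0 XY; apply: fsubsetIl.
have Y0 : Y != fset0 by apply: fsubset_neq0 XY; apply: fsubsetIr.
have XY0 : X `|` Y != fset0 by apply: fsubset_neq0 X0; apply: fsubsetUl.
case KL: (stabf X `<=` stabf Y).
  apply: leq_trans (geq_minl _ _) _; apply: leq_add.
    by apply: fsubset_leq_card; apply: fsubsetUl.
  apply: fsubset_leq_card; apply: fsubset_trans (I_sub_M X0 Y0).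
  by rewrite fsubsetIidl.
case LK: (stabf Y `<=` stabf X).
  apply: leq_trans (geq_minr _ _) _; apply: leq_add.
    by apply: fsubset_leq_card; apply: fsubsetUr.
  apply: fsubset_leq_card; apply: fsubset_trans (I_sub_M X0 Y0).
  by rewrite fsubsetIidr.
rewrite leqNgt; apply/negP; rewrite leq_min => /andP[h1 h2].
have c1 := cardfsUI X Y.
have c2 := cardfsID X Y.
have c3 := cardfsID Y X.
have H1 : (#|` Y `\` X| + #|` stabf (X `|` Y)| < #|` stabf X|)%N.
  by rewrite fsetIC in c1; lia.
have H2 : (#|` X `\` Y| + #|` stabf (X `|` Y)| < #|` stabf Y|)%N.
  lia.
move/negbT/fsubsetPn: KL => [k kK kL].
move/negbT/fsubsetPn: LK => [l lL lK].
have i1 := fin_ineq X0 Y0 H1 H2 lL lK.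
rewrite fsetUC in H1 H2.
have i2 := fin_ineq Y0 X0 H2 H1 kK kL.
lia.
Qed.

Definition foldU (F : G -> {fset G}) (s : seq G) : {fset G} :=
  foldr (fun a U => F a `|` U) fset0 s.

Lemma mem_foldU F s x : reflect (exists2 a, a \in s & x \in F a) (x \in foldU F s).
Proof.
elim: s => [|a s IH] /=; first by rewrite in_fset0; constructor => -[].
rewrite in_fsetU; apply: (iffP orP) => [[xa|/IH[b bs xb]]|[b]].
- by exists a => //; rewrite inE eqxx.
- by exists b => //; rewrite inE bs orbT.
rewrite inE => /orP[/eqP->|bs xb]; first by left.
by right; apply/IH; exists b.
Qed.

Lemma card_foldU F s k : uniq s -> (forall x, x \in s -> #|` F x| = k) ->
  (forall x y, x \in s -> y \in s -> x != y -> F x `&` F y = fset0) ->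
  #|` foldU F s| = (size s * k)%N.
Proof.
elim: s => [|a s IH] /=; first by move=> *; rewrite /foldU /= mul0n.
move=> /andP[as_ us] Hk Hd.
have sub b : b \in s -> b \in a :: s by move=> bs; rewrite inE bs orbT.
have c := cardfsUI (F a) (foldU F s).
have E0 : F a `&` foldU F s = fset0.
  apply/eqP; rewrite -fsubset0; apply/fsubsetP => z /fsetIP[za /mem_foldU[b bs zb]].
  have ab : a != b by apply: contraNneq as_ => ->.
  by rewrite -(Hd a b (mem_head _ _) (sub b bs) ab) in_fsetI za zb.
have IH' : #|` foldU F s| = (size s * k)%N.
  apply: IH => //; first by move=> x xs; apply: Hk; apply: sub.
  by move=> x y xs ys; apply: Hd; apply: sub.
rewrite E0 cardfs0 addn0 Hk ?mem_head // IH' in c.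
by rewrite /foldU /= -/(foldU F s) c mulSn.
Qed.

Lemma union_list F s z m : s != [::] -> (forall a, a \in s -> z \in F a) ->
  (forall a, a \in s -> (m <= #|` F a| + #|` stabf (F a)|)%N) ->
  (m <= #|` foldU F s| + #|` stabf (foldU F s)|)%N.
Proof.
elim: s => [//|a s IH] _ Hz Hm /=.
case: (altP (s =P [::])) => [->|s0] /=.
  by rewrite fsetU0; apply: Hm; rewrite inE eqxx.
have sub b : b \in s -> b \in a :: s by move=> bs; rewrite inE bs orbT.
have IH' := IH s0 (fun b bs => Hz b (sub b bs)) (fun b bs => Hm b (sub b bs)).
apply: leq_trans (union_stab _); last first.
  apply/fset0Pn; exists z; rewrite in_fsetI Hz ?inE ?eqxx //=.
  case/lastP: s s0 {IH IH'} sub Hz Hm => [//|s' b] _ sub Hz _.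
  apply/mem_foldU; exists b; first by rewrite mem_rcons inE eqxx.
  by apply: Hz; apply: sub; rewrite mem_rcons inE eqxx.
by rewrite leq_min Hm ?inE ?eqxx.
Qed.

Lemma kneser_aux n : forall A B, (#|` B| <= n)%N -> A != fset0 -> B != fset0 ->
  (#|` A| + #|` B| <= #|` sumf A B| + #|` stabf (sumf A B)|)%N.
Proof.
elim: n => [|n IH] A B Bn A0 B0.
  by move: B0; rewrite -cardfs_gt0; lia.
have /fset0Pn[b0 b0B] := B0.
have /fset0Pn[a0 a0A] := A0.
set N := [fset a in A | ~~ (shf (a - b0) B `<=` A)].
have NP a : (a \in N) = (a \in A) && ~~ (shf (a - b0) B `<=` A) by rewrite /N in_fset.
case: (boolP (N == fset0)) => N0.
  have HA a : a \in A -> shf (a - b0) B `<=` A.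
    move=> aA; apply: contraTT N0 => H; apply/fset0Pn; exists a; by rewrite NP aA.
  apply: leq_add.
    rewrite -(card_shf b0 A); apply: fsubset_leq_card; apply/fsubsetP => y.
    by rewrite shfP => yA; rewrite -(subrK b0 y); apply: mem_sumf.
  rewrite -(card_shf (- b0) B); apply: fsubset_leq_card; apply/fsubsetP => x.
  rewrite shfP opprK => xB; apply: stabf_sumf => //; apply/(stabfP _ A0) => a aA.
  apply: (fsubsetP (HA a aA)); rewrite shfP.
  by rewrite opprB addrA addrAC addrK.
pose e a := a - b0.
pose Ae a := A `|` shf (e a) B.
pose Be a := [fset b in B | e a + b \in A].
have BeP a b : (b \in Be a) = (b \in B) && (e a + b \in A) by rewrite /Be in_fset.
pose Ce a := sumf (Ae a) (Be a).
have key a : a \in N -> (#|` A| + #|` B| <= #|` Ce a| + #|` stabf (Ce a)|)%N.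
  rewrite NP => /andP[aA /fsubsetPn[y]]; rewrite shfP => yB yA.
  have b0Be : b0 \in Be a by rewrite BeP b0B /e subrK.
  have Ae0 : Ae a != fset0 by apply/fset0Pn; exists a0; rewrite in_fsetU a0A.
  have Be0 : Be a != fset0 by apply/fset0Pn; exists b0.
  have BeB : Be a `<=` B by apply/fsubsetP => b; rewrite BeP => /andP[].
  have BeBp : Be a `<` B.
    rewrite fproperEneq BeB andbT; apply/eqP => E.
    by move: yB; rewrite -E BeP /e [_ + (y - _)]addrC subrK (negbTE yA) andbF.
  have Ben : (#|` Be a| <= n)%N.
    by rewrite -ltnS (leq_trans (fproper_ltn_card BeBp) Bn).
  have := IH _ _ Ben Ae0 Be0; rewrite -/(Ce a).
  suff -> : (#|` Ae a| + #|` Be a| = #|` A| + #|` B|)%N by [].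
  have c := cardfsUI A (shf (e a) B).
  have EI : A `&` shf (e a) B = shf (e a) (Be a).
    apply/fsetP => x; rewrite in_fsetI !shfP BeP.
    by rewrite [e a + _]addrC subrK andbC.
  by rewrite EI !card_shf in c; rewrite /Ae; exact: c.
have CE : sumf A B = foldU Ce N.
  apply/fsetP => x; apply/idP/idP.
    move=> /sumfP[a [b [aA bB ->]]].
    case: (boolP (a \in N)) => aN.
      apply/mem_foldU; exists a => //.
      have -> : a + b = (e a + b) + b0 by rewrite /e addrAC subrK.
      apply: mem_sumf; first by rewrite in_fsetU mem_shf bB orbT.
      by rewrite BeP b0B /e subrK.
    have /fset0Pn[a1 a1N] := N0.
    apply/mem_foldU; exists a1 => //.
    have -> : a + b = (e a + b) + b0 by rewrite /e addrAC subrK.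
    apply: mem_sumf; last by rewrite BeP b0B /e subrK; move: a1N; rewrite NP => /andP[].
    rewrite in_fsetU; apply/orP; left; move: aN; rewrite NP aA /= negbK => /fsubsetP; apply.
    by rewrite mem_shf.
  move=> /mem_foldU[a aN] /sumfP[u [v []]].
  rewrite in_fsetU BeP shfP => /orP[uA|uB] /andP[vB evA] ->; first by apply: mem_sumf.
  have -> : u + v = (e a + v) + (u - e a).
    by rewrite [e a + v]addrC -addrA [e a + (u - e a)]addrC subrK addrC.
  by apply: mem_sumf.
rewrite CE; apply: (@union_list _ _ (a0 + b0)).
- by apply: contraNneq N0 => /= H; apply/eqP/fsetP => x; rewrite in_fset0; apply/negbTE; rewrite -[x \in N]/(x \in enum_fset N) H.
- move=> a aN; apply: mem_sumf; first by rewrite in_fsetU a0A.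
  by rewrite BeP b0B /e subrK; move: aN; rewrite NP => /andP[].
- by move=> a aN; apply: key.
Qed.

End KneserFin.

Section KW.
Local Open Scope fset_scope.
Local Open Scope ring_scope.
Theorem kneser_weak (G : zmodType) (A B : {fset G}) : A != fset0 -> B != fset0 ->
  (#|` A| + #|` B| <= #|` sumf A B| + #|` stabf (sumf A B)|)%N.
Proof. exact: kneser_aux. Qed.
End KW.


Section Lims.
Variable R : realType.
Implicit Types (u : R^nat) (L : R).

Lemma bnd01 u : (forall n, 0 <= u n <= 1) -> bounded_fun u.
Proof.
move=> H; exists 1; split; first exact: num_real.
move=> M M1 n _ /=; have /andP[h0 h1] := H n.
by rewrite ger0_norm // (le_trans h1) // ltW.
Qed.

Lemma limsup_lt u L : bounded_fun u -> limn_sup u < L ->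
  exists N, forall n, (N <= n)%N -> u n < L.
Proof.
move=> bu; rewrite limn_supE //.
have ne : range (sups u) !=set0 by exists (sups u 0%N), 0%N.
move=> /(inf_lt ne)[_ [N _ <-] sNL]; exists N => n Nn.
apply: le_lt_trans sNL; rewrite /sups /=.
apply: ub_le_sup; last by exists n.
exact/has_ubound_sdrop/bounded_fun_has_ubound.
Qed.

Lemma limsup_gt u L : bounded_fun u -> L < limn_sup u ->
  forall N, exists2 n, (N <= n)%N & L < u n.
Proof.
move=> bu; rewrite limn_supE // => H N.
have : inf (range (sups u)) <= sups u N.
  by apply: ge_inf; [exact: bounded_fun_has_lbound_sups|exists N].
move=> /(lt_le_trans H); rewrite /sups /=.
have ne : sdrop u N !=set0 by exists (u N); exists N => /=.
by move=> /(sup_gt ne)[_ [n Nn <-] Lu]; exists n.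
Qed.

Lemma liminf_lt u L : bounded_fun u -> limn_inf u < L ->
  forall N, exists2 n, (N <= n)%N & u n < L.
Proof.
move=> bu; rewrite limn_infE // => H N.
have : infs u N <= sup (range (infs u)).
  by apply: ub_le_sup; [exact: bounded_fun_has_ubound_infs|exists N].
move=> /le_lt_trans /(_ H); rewrite /infs /=.
have ne : sdrop u N !=set0 by exists (u N); exists N => /=.
by move=> /(inf_lt ne)[_ [n Nn <-] Lu]; exists n.
Qed.

Lemma liminf_gt u L : bounded_fun u -> L < limn_inf u ->
  exists N, forall n, (N <= n)%N -> L < u n.
Proof.
move=> bu; rewrite limn_infE //.
have ne : range (infs u) !=set0 by exists (infs u 0%N), 0%N.
move=> /(sup_gt ne)[_ [N _ <-] sNL]; exists N => n Nn.
apply: lt_le_trans sNL _; rewrite /infs /=.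
apply: ge_inf; last by exists n.
exact/has_lbound_sdrop/bounded_fun_has_lbound.
Qed.

Lemma lim_evcst u c N : (forall n, (N <= n)%N -> u n = c) ->
  limn_inf u = c /\ limn_sup u = c.
Proof.
move=> H; have cv : (u : nat -> R^o) @ \oo --> (c : R^o).
  by apply: cvg_near_cst; exists N => // n /= Nn; apply: H.
by have [-> ->] := cvg_limn_inf_sup cv.
Qed.
End Lims.

Section Dens.
Local Open Scope fset_scope.
Local Open Scope classical_set_scope.
Local Open Scope ring_scope.
Variables (G : zmodType) (Gn : nat -> set G).
Hypothesis Gfin : forall n, finite_set (Gn n).
Hypothesis Gsub : forall n, is_subgroup (Gn n).
Hypothesis Gmono : forall n, Gn n `<=` Gn n.+1.
Hypothesis Gcov : \bigcup_n Gn n = [set: G].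

Lemma Gmono' m n : (m <= n)%N -> Gn m `<=` Gn n.
Proof.
elim: n => [|n IH]; first by rewrite leqn0 => /eqP ->.
rewrite leq_eqVlt => /orP[/eqP ->//|]; rewrite ltnS => /IH h.
by move=> x /h; apply: Gmono.
Qed.

Lemma Gex x : exists n, Gn n x.
Proof. by have : [set: G] x by []; rewrite -Gcov => -[n _ xn]; exists n. Qed.

Lemma G0 n : Gn n 0. Proof. by case: (Gsub n). Qed.
Lemma GB n x y : Gn n x -> Gn n y -> Gn n (x - y). Proof. by case: (Gsub n) => _; apply. Qed.
Lemma GN n x : Gn n x -> Gn n (- x). Proof. by move=> h; rewrite -sub0r; apply: GB => //; apply: G0. Qed.
Lemma GD n x y : Gn n x -> Gn n y -> Gn n (x + y).
Proof. by move=> hx hy; rewrite -[y]opprK; apply: GB => //; apply: GN. Qed.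

Definition res n (P : set G) : {fset G} := fset_set (P `&` Gn n).

Lemma resP n P x : reflect (P x /\ Gn n x) (x \in res n P).
Proof.
rewrite /res in_fset_set; last by apply: finite_setIr.
by apply: (iffP idP) => [/set_mem[] //|[Px Gx]]; apply: mem_set.
Qed.

Lemma res_sub n P Q : P `<=` Q -> (res n P `<=` res n Q)%fset.
Proof. by move=> PQ; apply/fsubsetP => x /resP[/PQ Px Gx]; apply/resP. Qed.

Lemma ev_list (T : eqType) (P : nat -> T -> Prop) (s : seq T) :
  (forall m n x, (m <= n)%N -> P m x -> P n x) ->
  (forall x, x \in s -> exists n, P n x) ->
  exists N, forall n, (N <= n)%N -> forall x, x \in s -> P n x.
Proof.
move=> mono; elim: s => [|a s IH] H; first by exists 0%N.
have sub x : x \in s -> x \in a :: s by move=> xs; rewrite inE xs orbT.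
have [N1 h1] := IH (fun x xs => H x (sub x xs)).
have [N2 h2] := H a (mem_head a s).
exists (maxn N1 N2) => n; rewrite geq_max => /andP[n1 n2] x.
rewrite inE => /orP[/eqP->|xs]; first by apply: mono h2.
exact: h1.
Qed.

Lemma Gex_list (s : seq G) : exists N, forall n, (N <= n)%N -> forall x, x \in s -> Gn n x.
Proof.
apply: ev_list => [m n x mn|x _]; first by apply: Gmono'.
exact: Gex.
Qed.


Variables (R : realType) (A B : set G).
Let S := sumset A B.
Let H := Stab S.

Lemma Sper h s : H h -> S s -> S (h + s).
Proof. by move=> Hh Ss; apply: Hh. Qed.

Lemma H0 : H 0.
Proof. by move=> x Sx; rewrite add0r. Qed.

Lemma HD g h : H g -> H h -> H (g + h).
Proof. by move=> Hg Hh x Sx; rewrite -addrA; apply/Hg/Hh. Qed.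

Lemma HN g : H g -> H (- g).
Proof.
move=> Hg x Sx; have [m gm] := Gex g; have [p xp] := Gex x.
pose n := maxn m p.
have gn : Gn n g by apply: Gmono' gm; apply: leq_maxl.
have xn : Gn n x by apply: Gmono' xp; apply: leq_maxr.
have xT : x \in res n S by apply/resP.
have T0 : res n S != fset0 by apply/fset0Pn; exists x.
have gT : g \in stabf (res n S).
  by apply/(stabfP _ T0) => y /resP[Sy yn]; apply/resP; split; [apply: Hg|apply: GD].
have := (stabfP _ T0 (stabfN T0 gT)) _ xT.
by case/resP.
Qed.

Lemma HB g h : H g -> H h -> H (g - h).
Proof. by move=> Hg Hh; apply: HD => //; apply: HN. Qed.

Lemma Hsym x y : H (x - y) -> H (y - x).
Proof. by move=> h; rewrite -opprB; apply: HN. Qed.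

Lemma Htrans x y z : H (x - y) -> H (y - z) -> H (x - z).
Proof. by move=> h1 h2; have := HD h1 h2; rewrite addrA subrK. Qed.

Definition pw (F : {fset G}) := forall x y, x \in F -> y \in F -> H (x - y) -> x = y.

Definition good (d : R) n :=
  (#|` res n S|%:R + d * #|` res n setT|%:R < (#|` res n A| + #|` res n B|)%:R :> R).

Lemma card_res_gt0 n : (0 < #|` res n setT|)%N.
Proof. by rewrite cardfs_gt0; apply/fset0Pn; exists 0; apply/resP; split => //; apply: G0. Qed.

Lemma real_ineq (f d g k : R) : 0 < f -> 0 < g -> d * g < k -> f * k <= g -> f * d < 1.
Proof. by move=> *; nra. Qed.

Lemma real_ineq2 (s ab d g k : R) : s + d * g < ab -> ab <= s + k -> d * g < k.
Proof. by move=> *; lra. Qed.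

Lemma fin_idx (d : R) : 0 < d -> (forall N, exists2 n, (N <= n)%N & good d n) ->
  forall F, pw F -> (1 < #|` F|)%N -> #|` F|%:R * d < 1.
Proof.
move=> d0 Hgood F pwF F2.
pose Pp n (xy : G * G) := xy.1 = xy.2 \/ exists a b, [/\ A a, B b, Gn n a, Gn n b &
  ~ S (xy.1 - xy.2 + (a + b))].
have [N1 hN1] := Gex_list F.
have [N2 hN2] : exists N, forall n, (N <= n)%N -> forall xy, xy \in [seq (x, y) | x <- F, y <- F] -> Pp n xy.
  apply: ev_list => [m n [x y] mn [E|[a [b [Aa Bb am bm nS]]]]|[x y] /allpairsP[[x' y'] /= [xF yF [-> ->]]]]; first by left.
    by right; exists a, b; split => //; [exact: (Gmono' mn am)|exact: (Gmono' mn bm)].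
  case: (eqVneq x' y') => [->|xy]; first by exists 0%N; left.
  have nH : ~ H (x' - y') by move=> hxy; move/eqP: xy; apply; apply: pwF.
  have [s [Ss nSs]] : exists s, S s /\ ~ S (x' - y' + s).
    by apply: contrapT => hn; apply: nH => s Ss; apply: contrapT => nSs; apply: hn; exists s.
  case: Ss nSs => a Aa [b Bb <-] nSs.
  have [N hN] := Gex_list [:: a; b].
  exists N; right; exists a, b; split => //; apply: (hN N (leqnn N)); rewrite !inE eqxx ?orbT //.
have [n Nn gn] := Hgood (maxn N1 N2).
have n1 : (N1 <= n)%N by apply: leq_trans Nn; apply: leq_maxl.
have n2 : (N2 <= n)%N by apply: leq_trans Nn; apply: leq_maxr.
have FG x : x \in F -> Gn n x by apply: hN1.
have [x0 [y0 [x0F y0F x0y0]]] : exists x y, [/\ x \in F, y \in F & x != y].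
  have /fset0Pn[x0 x0F] : F != fset0 by rewrite -cardfs_gt0; apply: ltnW.
  have : (F `\ x0)%fset != fset0.
    by rewrite (cardfsD1 x0) x0F add1n ltnS in F2; rewrite -cardfs_gt0.
  move=> /fset0Pn[y0]; rewrite in_fsetD1 => /andP[y0x0 y0F].
  by exists x0, y0; split => //; rewrite eq_sym.
have := hN2 n n2 (x0, y0) (allpairs_f pair x0F y0F).
move=> [/= /eqP|[a0 [b0 [Aa0 Bb0 a0n b0n _]]]]; first by rewrite (negbTE x0y0).
set An := res n A; set Bn := res n B.
have An0 : An != fset0 by apply/fset0Pn; exists a0; apply/resP.
have Bn0 : Bn != fset0 by apply/fset0Pn; exists b0; apply/resP.
set T := sumf An Bn.
have T0 := sumf_neq0 An0 Bn0.
have TS : (T `<=` res n S)%fset.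
  apply/fsubsetP => z /sumfP[a [b [/resP[Aa an] /resP[Bb bn] ->]]].
  by apply/resP; split; [exists a => //; exists b | exact: GD].
set K := stabf T.
have KW := kneser_weak An0 Bn0.
have KG k : k \in K -> Gn n k.
  move=> kK; have /fset0Pn[t tT] := T0.
  have ktT := (stabfP _ T0 kK) _ tT.
  have /resP[_ ktn] := fsubsetP TS _ ktT; have /resP[_ tn] := fsubsetP TS _ tT.
  by have := GB ktn tn; rewrite addrK.
have cardF : (#|` F| * #|` K| <= #|` res n setT|)%N.
  have E := card_foldU (F := fun f => shf f K) (s := F) (k := #|` K|) (fset_uniq F).
  rewrite -E.
  - apply: fsubset_leq_card; apply/fsubsetP => z /mem_foldU[f fF]; rewrite shfP => zK.
    by apply/resP; split => //; rewrite -(subrK f z); apply: GD; [exact: KG|exact: FG].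
  - by move=> f _; rewrite card_shf.
  move=> f f' fF f'F ff'; apply/eqP; rewrite -fsubset0; apply/fsubsetP => z /fsetIP[].
  rewrite !shfP => z1 z2.
  have hK := stabfB T0 z2 z1.
  rewrite opprB addrC addrA subrK in hK.
  have [E'|[a [b [Aa Bb an bn nS]]]] := hN2 n n2 (f, f') (allpairs_f pair fF f'F).
    by move: E' ff' => /= ->; rewrite eqxx.
  exfalso; apply: nS => /=.
  have abT : a + b \in T by apply: mem_sumf; apply/resP.
  by have /(fsubsetP TS) /resP[] := (stabfP _ T0 hK) _ abT.
have h1 : (#|` An| + #|` Bn| <= #|` res n S| + #|` K|)%N.
  by apply: leq_trans KW _; rewrite leq_add2r; apply: fsubset_leq_card TS.
apply: (@real_ineq #|` F|%:R d #|` res n setT|%:R #|` K|%:R).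
- by rewrite ltr0n; apply: leq_trans F2.
- by rewrite ltr0n; apply: card_res_gt0.
- apply: real_ineq2 gn _; rewrite -natrD ler_nat; exact: h1.
- by rewrite -natrM ler_nat.
Qed.


Lemma reps_exist M : (forall F, pw F -> (#|` F| <= M)%N) ->
  exists R0 : {fset G}, pw R0 /\ forall g, exists2 r, r \in R0 & H (g - r).
Proof.
move=> HM; apply: contrapT => Hno.
suff : forall k, exists F, pw F /\ #|` F| = k.
  by move=> /(_ M.+1)[F [pwF cF]]; have := HM F pwF; rewrite cF ltnn.
elim=> [|k [F [pwF cF]]].
  exists fset0; split; last by rewrite cardfs0.
  by move=> x y; rewrite in_fset0.
have [g hg] : exists g, forall r, r \in F -> ~ H (g - r).
  apply: contrapT => hn; apply: Hno; exists F; split => // g.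
  apply: contrapT => hg; apply: hn; exists g => r rF Hgr; apply: hg; by exists r.
have gF : g \notin F by apply/negP => gF; apply: (hg g gF); rewrite subrr; apply: H0.
exists (g |` F)%fset; split; last by rewrite cardfsU1 gF cF.
move=> x y; rewrite !in_fset1U => /orP[/eqP->|xF] /orP[/eqP->|yF] // Hxy.
- by exfalso; apply: (hg y yF).
- by exfalso; apply: (hg x xF); apply: Hsym.
- exact: pwF.
Qed.

Definition per (P : set G) := forall h x, H h -> P x -> P (h + x).
Definition XH (X : set G) : set G := [set x | exists2 a, X a & H (x - a)].

Lemma XH_per X : per (XH X).
Proof. by move=> h x Hh [a Xa Hxa]; exists a => //; rewrite -addrA; apply: HD. Qed.

Lemma sub_XH X : X `<=` XH X.
Proof. by move=> x Xx; exists x => //; rewrite subrr; apply: H0. Qed.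

Lemma S_per : per S.
Proof. by move=> h x Hh Sx; apply: Hh. Qed.

Lemma XH_per_eq P : per P -> XH P = P.
Proof.
move=> pP; apply/seteqP; split; last exact: sub_XH.
by move=> x [a Pa Hxa]; rewrite -(subrK a x); apply: pP.
Qed.

Lemma setT_per : per setT. Proof. by []. Qed.
Lemma H_per : per H. Proof. by move=> h x Hh Hx; apply: HD. Qed.

Lemma card_fsetI (X : {fset G}) : ([set` X] #= `I_#|` X|)%card.
Proof.
have /finite_setP[n Xn] := finite_fset X.
by have := card_fset_set Xn; rewrite set_fsetK => ->.
Qed.

Lemma coset_eq g r : H (g - r) -> coset H g = coset H r.
Proof.
move=> Hgr; apply/seteqP; split => x [h Hh <-].
  by exists (g - r + h); [apply: HD|rewrite addrA [r + _]addrC subrK].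
exists (h - (g - r)); first by apply: HB.
by rewrite opprB addrCA [g + (r - g)]addrC subrK addrC.
Qed.

Section Reps.
Variable R0 : {fset G}.
Hypothesis pwR0 : pw R0.
Hypothesis cR0 : forall g, exists2 r, r \in R0 & H (g - r).

Definition RP (P : set G) : {fset G} := [fset r in R0 | r \in P].

Lemma RPP P r : (r \in RP P) = (r \in R0) && (r \in P).
Proof. by rewrite /RP in_fset. Qed.

Lemma count_per n P : (forall r, r \in R0 -> Gn n r) -> per P ->
  #|` res n P| = (#|` RP P| * #|` res n H|)%N.
Proof.
move=> R0n pP.
have -> : res n P = foldU (fun r => shf r (res n H)) (RP P).
  apply/fsetP => x; apply/idP/idP.
    move=> /resP[Px xn]; have [r rR Hxr] := cR0 x.
    apply/mem_foldU; exists r.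
      rewrite RPP rR; apply/mem_set; rewrite -(subrK x r).
      by apply: pP => //; apply: Hsym.
    by rewrite shfP; apply/resP; split => //; apply: GB => //; apply: R0n.
  move=> /mem_foldU[r]; rewrite RPP => /andP[rR /set_mem Pr].
  rewrite shfP => /resP[Hxr xrn]; apply/resP; split.
    by rewrite -(subrK r x); apply: pP.
  by rewrite -(subrK r x); apply: GD => //; apply: R0n.
apply: card_foldU; first exact: fset_uniq.
  by move=> r _; rewrite card_shf.
move=> r r' rR r'R rr'; apply/eqP; rewrite -fsubset0; apply/fsubsetP => z.
rewrite in_fsetI !shfP => /andP[/resP[h1 _] /resP[h2 _]].
move: rR r'R; rewrite !RPP => /andP[rR _] /andP[r'R _].
have : H (r - r') by have := Htrans (Hsym h1) h2.
by move=> /(pwR0 rR r'R) E; move: rr'; rewrite E eqxx.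
Qed.

Lemma coset_inj : {in [set` R0] &, injective (coset H)}.
Proof.
move=> r r' /= rR r'R E.
have : coset H r r by exists 0; [apply: H0|rewrite addr0].
rewrite E => -[h Hh rE].
apply: pwR0; [exact: set_mem rR | exact: set_mem r'R | rewrite -rE addrC addKr //].
Qed.

Lemma card_cosets : (cosets H #= `I_#|` R0|)%card.
Proof.
have -> : cosets H = coset H @` [set` R0].
  apply/seteqP; split => [C [g ->]|_ [r rR <-]]; last by exists r.
  by have [r rR Hgr] := cR0 g; exists r => //; rewrite (coset_eq Hgr).
apply: card_eq_trans (card_fsetI R0).
exact: inj_card_eq coset_inj.
Qed.

Lemma card_cosets_meeting X : (cosets_meeting H X #= `I_#|` RP (XH X)|)%card.
Proof.
have -> : cosets_meeting H X = coset H @` [set` RP (XH X)].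
  apply/seteqP; split => [C [[g ->] [y [[h Hh <-] Xy]]]|_ [r /= + <-]].
    have [r rR Hgr] := cR0 g; exists r; last by rewrite (coset_eq Hgr).
    rewrite /= RPP rR; apply/mem_set; exists (g + h) => //.
    by rewrite opprD addrA; apply: HB => //; apply: Hsym.
  rewrite RPP => /andP[rR /set_mem[a Xa Hra]]; split; first by exists r.
  exists a; split => //; exists (a - r); first by apply: Hsym.
  by rewrite addrC subrK.
apply: card_eq_trans (card_fsetI _).
apply: inj_card_eq => r r' rR r'R; apply: coset_inj.
  by move/set_mem: rR => /=; rewrite RPP => /andP[rR0 _]; apply/mem_set.
by move/set_mem: r'R => /=; rewrite RPP => /andP[rR0 _]; apply/mem_set.
Qed.


Lemma RP_sub P : (RP P `<=` R0)%fset.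
Proof. by apply/fsubsetP => r; rewrite RPP => /andP[]. Qed.

Lemma RP_setT : RP setT = R0.
Proof. by apply/fsetP => r; rewrite RPP; case: (r \in R0) => //=; apply/mem_set. Qed.

Lemma res_setT_cnt n : (forall r, r \in R0 -> Gn n r) ->
  #|` res n setT| = (#|` R0| * #|` res n H|)%N.
Proof. by move=> R0n; rewrite (count_per R0n setT_per) RP_setT. Qed.

Lemma res_H_gt0 n : (0 < #|` res n H|)%N.
Proof. by rewrite cardfs_gt0; apply/fset0Pn; exists 0; apply/resP; split; [apply: H0|apply: G0]. Qed.

Lemma cnt_le_XH n X : (forall r, r \in R0 -> Gn n r) ->
  (#|` res n X| <= #|` RP (XH X)| * #|` res n H|)%N.
Proof.
move=> R0n; rewrite -(count_per R0n (@XH_per X)).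
by apply: fsubset_leq_card; apply: res_sub; apply: sub_XH.
Qed.


Lemma cnt_S n : (forall r, r \in R0 -> Gn n r) ->
  #|` res n S| = (#|` RP (XH S)| * #|` res n H|)%N.
Proof. by move=> R0n; rewrite (XH_per_eq S_per) (count_per R0n S_per). Qed.

Lemma cnt_XH n X : (forall r, r \in R0 -> Gn n r) ->
  #|` res n (XH X)| = (#|` RP (XH X)| * #|` res n H|)%N.
Proof. by move=> R0n; rewrite (count_per R0n (@XH_per X)). Qed.

Lemma ge_case n : (forall r, r \in R0 -> Gn n r) ->
  (forall r, r \in RP (XH A) -> exists a', [/\ A a', Gn n a' & H (a' - r)]) ->
  (exists a, A a) -> (exists b, B b) ->
  (#|` RP (XH A)| + #|` RP (XH B)| <= #|` RP (XH S)| + 1)%N.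
Proof.
move=> R0n wit [a0 Aa0] [b0 Bb0].
set X' := res n (XH A); set Y' := res n (XH B).
have X0 : X' != fset0.
  have [r rR Har] := cR0 a0; apply/fset0Pn; exists r; apply/resP; split; last exact: R0n.
  by exists a0 => //; apply: Hsym.
have Y0 : Y' != fset0.
  have [r rR Hbr] := cR0 b0; apply/fset0Pn; exists r; apply/resP; split; last exact: R0n.
  by exists b0 => //; apply: Hsym.
have E : sumf X' Y' = res n S.
  apply/fsetP => z; apply/idP/idP.
    move=> /sumfP[x [y [/resP[[a Aa Hxa] xn] /resP[[b Bb Hyb] yn] ->]]].
    apply/resP; split; last exact: GD.
    have -> : x + y = (x - a + (y - b)) + (a + b) by rewrite addrACA !subrK.
    by apply: S_per; [apply: HD|exists a => //; exists b].
  move=> /resP[[a Aa [b Bb zE]] zn].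
  have [r rR Har] := cR0 a.
  have rRA : r \in RP (XH A) by rewrite RPP rR; apply/mem_set; exists a => //; apply: Hsym.
  have [a' [Aa' a'n Ha'r]] := wit r rRA.
  suff : a' + (z - a') \in sumf X' Y' by rewrite addrC subrK.
  apply: mem_sumf; apply/resP; split => //; first exact: sub_XH.
    exists b => //; rewrite -zE [a + b - a']addrAC addrK.
    exact: Htrans Har (Hsym Ha'r).
  exact: GB.
have T0 : res n S != fset0 by rewrite -E; apply: sumf_neq0.
have Stb : (stabf (res n S) `<=` res n H)%fset.
  apply/fsubsetP => g gT; have /fset0Pn[t0 t0T] := T0.
  have /resP[_ gt0n] := (stabfP _ T0 gT) _ t0T.
  have /resP[_ t0n] := t0T.
  apply/resP; split; last by have := GB gt0n t0n; rewrite addrK.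
  move=> s Ss; have [r rR Hsr] := cR0 s.
  have rT : r \in res n S.
    apply/resP; split; last exact: R0n.
    by rewrite -(subrK s r); apply: S_per => //; apply: Hsym.
  have /resP[Sgr _] := (stabfP _ T0 gT) _ rT.
  have -> : g + s = (s - r) + (g + r) by rewrite addrCA subrK.
  exact: S_per.
have KW := kneser_weak X0 Y0.
rewrite E in KW.
have KW' := leq_trans KW (leq_add (leqnn _) (fsubset_leq_card Stb)).
rewrite /X' /Y' !(cnt_XH _ R0n) (cnt_S R0n) in KW'.
rewrite -mulnDl -[X in (_ <= _ + X)%N]mul1n -mulnDl leq_pmul2r in KW' => //.
exact: res_H_gt0.
Qed.

Lemma empty_case : (forall s, ~ S s) -> (#|` R0| <= 1)%N.
Proof.
move=> Sn; case: (altP (R0 =P fset0)) => [->|/fset0Pn[x xR]]; first by rewrite cardfs0.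
rewrite -(cardfs1 x); apply: fsubset_leq_card; apply/fsubsetP => y yR.
rewrite in_fset1; apply/eqP; apply: pwR0 => // s Ss; exfalso; exact: Sn Ss.
Qed.

End Reps.


Lemma ratioE P n : dens_ratio R Gn P n = #|` res n P|%:R / #|` res n setT|%:R.
Proof. by rewrite /dens_ratio /res setTI. Qed.

Lemma real_lt3 (x y z : R) : x + y < z -> 0 <= y -> x < z.
Proof. by move=> *; lra. Qed.

Lemma main_result (d : R) : 0 < d -> (forall N, exists2 n, (N <= n)%N & good d n) ->
  exists q : nat,
    [/\ (0 < q)%N,
        (cosets H #= `I_q)%card,
        ldens R Gn H = udens R Gn H,
        ldens R Gn H = (q%:R)^-1
      & exists a b c : nat,
          [/\ (cosets_meeting H A #= `I_a)%card,
              (cosets_meeting H B #= `I_b)%card,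
              (cosets_meeting H (sumset A B) #= `I_c)%card
            & c%:Z = a%:Z + b%:Z - 1]].
Proof.
move=> d0 Hg.
have fi := fin_idx d0 Hg.
pose M := maxn 1 (Num.bound d^-1).
have HM : forall F, pw F -> (#|` F| <= M)%N.
  move=> F pwF; case: (leqP #|` F| 1) => F1; first by apply: leq_trans F1 (leq_maxl _ _).
  have h := fi F pwF F1.
  have : (#|` F|%:R < (Num.bound d^-1)%:R :> R).
    apply: lt_trans (archi_boundP _); last by rewrite invr_ge0 ltW.
    by rewrite -[d^-1]mul1r ltr_pdivlMr.
  by rewrite ltr_nat => /ltnW h'; apply: leq_trans h' (leq_maxr _ _).
have [R0 [pwR0 cR0]] := reps_exist HM.
have [N0 hN0] := Gex_list R0.
exists #|` R0|.
have q0 : (0 < #|` R0|)%N.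
  by rewrite cardfs_gt0; apply/fset0Pn; have [r rR _] := cR0 0; exists r.
have Hdens : forall n, (N0 <= n)%N -> dens_ratio R Gn H n = (#|` R0|%:R)^-1.
  move=> n nN; rewrite ratioE (res_setT_cnt pwR0 cR0 (hN0 n nN)) natrM invfM mulrCA.
  by rewrite mulfV ?mulr1 // pnatr_eq0 -lt0n res_H_gt0.
have [lH uH] := lim_evcst Hdens.
split => //; try exact: card_cosets; try by rewrite /ldens /udens ?lH ?uH.
exists #|` RP R0 (XH A)|, #|` RP R0 (XH B)|, #|` RP R0 (XH S)|; split.
- exact: card_cosets_meeting.
- exact: card_cosets_meeting.
- exact: card_cosets_meeting.
have lt1 : (#|` RP R0 (XH S)| < #|` RP R0 (XH A)| + #|` RP R0 (XH B)|)%N.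
  have [n nN gn] := Hg N0.
  have R0n := hN0 n nN.
  have h1 : (#|` res n S| < #|` res n A| + #|` res n B|)%N.
    have h : (#|` res n S|%:R < (#|` res n A| + #|` res n B|)%:R :> R).
      by have := @real_lt3 _ _ _ gn; apply; rewrite mulr_ge0 ?ler0n ?ltW.
    by rewrite ltr_nat in h.
  rewrite -(ltn_pmul2r (res_H_gt0 n)) mulnDl -(cnt_S pwR0 cR0 R0n).
  apply: leq_trans h1 _; apply: leq_add; exact: cnt_le_XH.
have le1 : (#|` RP R0 (XH A)| + #|` RP R0 (XH B)| <= #|` RP R0 (XH S)| + 1)%N.
  case: (pselect (exists a, A a)) => [Ane|Ae]; last first.
    have -> : RP R0 (XH A) = fset0.
      apply/fsetP => r; rewrite RPP in_fset0; apply/negbTE; rewrite negb_and.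
      by apply/orP; right; apply/negP => /set_mem[a Aa _]; apply: Ae; exists a.
    rewrite cardfs0 add0n; apply: leq_trans (leq_addl _ _).
    apply: leq_trans (fsubset_leq_card (RP_sub R0 _)) _.
    by apply: (empty_case pwR0) => s [a Aa _]; apply: Ae; exists a.
  case: (pselect (exists b, B b)) => [Bne|Be]; last first.
    have -> : RP R0 (XH B) = fset0.
      apply/fsetP => r; rewrite RPP in_fset0; apply/negbTE; rewrite negb_and.
      by apply/orP; right; apply/negP => /set_mem[b Bb _]; apply: Be; exists b.
    rewrite cardfs0 addn0; apply: leq_trans (leq_addl _ _).
    apply: leq_trans (fsubset_leq_card (RP_sub R0 _)) _.
    by apply: (empty_case pwR0) => s [a Aa [b Bb _]]; apply: Be; exists b.
  have [N1 hN1] : exists N, forall n, (N <= n)%N -> forall r, r \in RP R0 (XH A) ->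
      exists a', [/\ A a', Gn n a' & H (a' - r)].
    apply: ev_list => [m n r mn [a' [Aa' a'm Ha']]|r].
      by exists a'; split => //; apply: Gmono' mn _ a'm.
    rewrite RPP => /andP[_ /set_mem[a Aa Hra]].
    have [n an] := Gex a; exists n, a; split => //; exact: Hsym.
  pose n := maxn N0 N1.
  apply: (ge_case pwR0 cR0 (n := n)) => //.
    by apply: hN0; apply: leq_maxl.
  by apply: hN1; apply: leq_maxr.
have E : (#|` RP R0 (XH A)| + #|` RP R0 (XH B)| = #|` RP R0 (XH S)| + 1)%N.
  by apply/eqP; rewrite eqn_leq le1 addn1.
by rewrite -PoszD E PoszD addrK.
Qed.


Lemma ratio01 P n : 0 <= dens_ratio R Gn P n <= 1.
Proof.
rewrite ratioE; have g0 : (0 < #|` res n setT|%:R :> R) by rewrite ltr0n card_res_gt0.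
rewrite divr_ge0 ?ler0n //= ler_pdivrMr // mul1r ler_nat.
by apply: fsubset_leq_card; apply: res_sub.
Qed.

Lemma bnd P : bounded_fun (dens_ratio R Gn P).
Proof. by apply: bnd01 => n; apply: ratio01. Qed.

Lemma good_of_ratio d n :
  dens_ratio R Gn S n + d < dens_ratio R Gn A n + dens_ratio R Gn B n -> good d n.
Proof.
rewrite !ratioE /good; have g0 : (0 < #|` res n setT|%:R :> R) by rewrite ltr0n card_res_gt0.
by rewrite -(ltr_pM2r g0) !mulrDl !divfK ?lt0r_neq0 // natrD.
Qed.

Lemma gap4 (x : R) : 0 < x -> exists d, 0 < d /\ x = 4 * d.
Proof.
move=> x0; exists (x / 4); split; first by rewrite divr_gt0.
by rewrite mulrC divfK // pnatr_eq0.
Qed.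

Lemma subd_lt (x d : R) : 0 < d -> x - d < x.
Proof. by move=> d0; rewrite ltrBlDr ltrDl. Qed.

Lemma addd_gt (x d : R) : 0 < d -> x < x + d.
Proof. by move=> d0; rewrite ltrDl. Qed.

Lemma lra1 (s a b lS lA lB d : R) : s < lS + d -> lA - d < a -> lB - d < b ->
  lA + lB - lS = 4 * d -> s + d < a + b.
Proof. by move=> *; lra. Qed.

Lemma FG1 : ldens R Gn S < ldens R Gn A + ldens R Gn B ->
  exists d, 0 < d /\ forall N, exists2 n, (N <= n)%N & good d n.
Proof.
rewrite /ldens => h.
have [d [d0 hd]] : exists d, 0 < d /\
  limn_inf (dens_ratio R Gn A) + limn_inf (dens_ratio R Gn B) - limn_inf (dens_ratio R Gn S) = 4 * d.
  by apply: gap4; rewrite subr_gt0.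
have [N1 h1] := liminf_gt (bnd A) (subd_lt _ d0).
have [N2 h2] := liminf_gt (bnd B) (subd_lt _ d0).
exists d; split => // N.
have [n nN hn] := liminf_lt (bnd S) (addd_gt _ d0) (maxn N (maxn N1 N2)).
have n1 : (N1 <= n)%N by apply: leq_trans _ nN; rewrite !leq_max leqnn !orbT.
have n2 : (N2 <= n)%N by apply: leq_trans _ nN; rewrite !leq_max leqnn !orbT.
exists n; first by apply: leq_trans _ nN; apply: leq_maxl.
by apply: good_of_ratio; apply: lra1 hn (h1 n n1) (h2 n n2) hd.
Qed.

Lemma FG3 : udens R Gn S < udens R Gn A + ldens R Gn B ->
  exists d, 0 < d /\ forall N, exists2 n, (N <= n)%N & good d n.
Proof.
rewrite /ldens /udens => h.
have [d [d0 hd]] : exists d, 0 < d /\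
  limn_sup (dens_ratio R Gn A) + limn_inf (dens_ratio R Gn B) - limn_sup (dens_ratio R Gn S) = 4 * d.
  by apply: gap4; rewrite subr_gt0.
have [N1 h1] := limsup_lt (bnd S) (addd_gt _ d0).
have [N2 h2] := liminf_gt (bnd B) (subd_lt _ d0).
exists d; split => // N.
have [n nN hn] := limsup_gt (bnd A) (subd_lt _ d0) (maxn N (maxn N1 N2)).
have n1 : (N1 <= n)%N by apply: leq_trans _ nN; rewrite !leq_max leqnn !orbT.
have n2 : (N2 <= n)%N by apply: leq_trans _ nN; rewrite !leq_max leqnn !orbT.
exists n; first by apply: leq_trans _ nN; apply: leq_maxl.
by apply: good_of_ratio; apply: lra1 (h1 n n1) hn (h2 n n2) hd.
Qed.

Lemma res_opp n : #|` res n (oppset B)| = #|` res n B|.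
Proof.
have -> : res n (oppset B) = [fset - x | x in res n B]%fset.
  apply/fsetP => x; apply/resP/imfsetP => [[[b Bb <-] xn]|[y /resP[By yn] ->]].
    exists b => //.
    by apply/resP; split => //; rewrite -[b]opprK; apply: GN.
  by split; [exists y|apply: GN].
by rewrite card_imfset //=; apply: oppr_inj.
Qed.

Lemma FG2 : udens R Gn S < udens R Gn A + udens R Gn B ->
  (forall n, #|` res n B| = #|` res n A|) ->
  exists d, 0 < d /\ forall N, exists2 n, (N <= n)%N & good d n.
Proof.
move=> h eqAB.
have rAB : dens_ratio R Gn B = dens_ratio R Gn A.
  by apply/funext => n; rewrite !ratioE eqAB.
move: h; rewrite /udens rAB => h.
have [d [d0 hd]] : exists d, 0 < d /\
  limn_sup (dens_ratio R Gn A) + limn_sup (dens_ratio R Gn A) - limn_sup (dens_ratio R Gn S) = 4 * d.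
  by apply: gap4; rewrite subr_gt0.
have [N1 h1] := limsup_lt (bnd S) (addd_gt _ d0).
exists d; split => // N.
have [n nN hn] := limsup_gt (bnd A) (subd_lt _ d0) (maxn N N1).
have n1 : (N1 <= n)%N by apply: leq_trans _ nN; apply: leq_maxr.
exists n; first by apply: leq_trans _ nN; apply: leq_maxl.
by apply: good_of_ratio; rewrite rAB; exact: (lra1 (h1 n n1) hn hn hd).
Qed.

End Dens.

Unset Implicit Arguments.
Set Strict Implicit.

Theorem theorem1p1 (R : realType) (G : zmodType) (Gn : nat -> set G)
  (A B : set G) :
  sigma_finite_seq Gn ->
  [\/ ldens R Gn (sumset A B) < ldens R Gn A + ldens R Gn B,
      udens R Gn (sumset A B) < udens R Gn A + udens R Gn B
        /\ (A = B \/ A = oppset B)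
    | udens R Gn (sumset A B) < udens R Gn A + ldens R Gn B] ->
  let H := Stab (sumset A B) in
  exists q : nat,
    [/\ (0 < q)%N,
        (cosets H #= `I_q)%card,
        ldens R Gn H = udens R Gn H,
        ldens R Gn H = (q%:R)^-1
      & exists a b c : nat,
          [/\ (cosets_meeting H A #= `I_a)%card,
              (cosets_meeting H B #= `I_b)%card,
              (cosets_meeting H (sumset A B) #= `I_c)%card
            & c%:Z = a%:Z + b%:Z - 1]].
Proof.
move=> [_ [Gfin Gsub Gmono Gcov]] hyp H.
have [d [d0 Hg]] : exists d : R, 0 < d /\ forall N, exists2 n, (N <= n)%N & good Gn A B d n.
  case: hyp => [h1|[h2 hAB]|h3].
  - exact: (FG1 Gfin Gsub h1).
  - apply: (FG2 Gfin Gsub h2) => n; case: hAB => [->//|->].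
    by rewrite (res_opp Gfin Gsub).
  - exact: (FG3 Gfin Gsub h3).
exact: (main_result Gfin Gsub Gmono Gcov d0 Hg).
Qed.
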